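(* Let $n\ge 3$, let $s_1,\dots,s_n$ be pairwise non-parallel lines through the origin in $\mathbb{R}^2$, and let $t(s_1,\dots,s_n)=k\pi$ (so $1\le k\le n-1$). Then $$\mathbf S_-\cong S^{n-k-2}\times D^{k-1},\qquad \mathbf S_+\cong S^{k-2}\times D^{n-k-1}$$ (homeomorphisms), so $\mathbf S(s_1,\dots,s_n)$ is homeomorphic to $S^{n-k-2}\times D^{k-1}\sqcup S^{k-2}\times D^{n-k-1}$. Here $D^m$ denotes the open $m$-dimensional disc, $D^0$ is a point, and $S^{-1}=\emptyset$.
   Context: For two lines $r,s$ through the origin, $\angle(r,s)$ is the minimal positive angle such that the counterclockwise rotation by $\angle(r,s)$ takes $r$ to $s$, and $t(s_1,\dots,s_n)=\sum_{i=1}^{n-1}\angle(s_i,s_{i+1})+\angle(s_n,s_1)$. For lines $e_1,\dots,e_n$ with $e_i$ parallel to $s_i$, $Q(e_1,\dots,e_n)$ is the closed polygon with consecutive vertices $v_i=e_i\cap e_{i+1}$ (indices mod $n$); $\widetilde{\mathbf S}(s_1,\dots,s_n)$ is the space of such polygons modulo translations. The oriented area of a polygon with vertices $v_i=(x_i,y_i)$ is $\mathcal A=\frac12\sum_i(x_iy_{i+1}-x_{i+1}y_i)$. The configuration space is $\mathbf S(s_1,\dots,s_n)=\{Q\in\widetilde{\mathbf S}:|\mathcal A(Q)|=1\}=\mathbf S_-\sqcup\mathbf S_+$, where $\mathbf S_\pm$ consists of the polygons with $\mathcal A(Q)=\pm1$. *)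

(* Defs.v *)
From Stdlib Require Import Reals Lra.
Open Scope R_scope.

Fixpoint sumR (n : nat) (f : nat -> R) : R :=
  match n with O => 0 | S m => sumR m f + f m end.

Definition nxt (n i : nat) : nat := Nat.modulo (S i) n.

(** ---------- Lines through the origin ----------
   A line through the origin is encoded by its angle theta in [0, pi):
   s = R * (cos theta, sin theta).  This encoding is bijective. *)

(** angle(r,s): the minimal positive angle alpha such that the
   counterclockwise rotation by alpha takes r to s, i.e. the minimal
   alpha > 0 with theta_r + alpha = theta_s (mod pi). *)
Definition ang (tr ts : R) : R :=
  if Rlt_dec tr ts then ts - tr else ts - tr + PI.

Definition tsum (n : nat) (theta : nat -> R) : R :=
  sumR n (fun i => ang (theta i) (theta (nxt n i))).

(** ---------- Lines parallel to s_i ----------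
   Every line parallel to s_i is  e = { p | cos(theta_i) p2 - sin(theta_i) p1 = c }
   for a unique offset c : R. *)
Definition on_line (th c : R) (p1 p2 : R) : Prop :=
  cos th * p2 - sin th * p1 = c.

(** ---------- Polygons ----------
   A polygon with n vertices is encoded by a point x of R^(2n):
   vertex v_i = (x (2i), x (2i+1)), for i < n.
   It is of the form Q(e_1,...,e_n) iff there are lines e_i parallel
   to s_i (offsets c i) with v_i = e_i ∩ e_{i+1} (indices mod n); since
   consecutive s_i are non-parallel the intersection is a single point,
   so "v_i lies on e_i and on e_{i+1}" means v_i = e_i ∩ e_{i+1}. *)
Definition vx (x : nat -> R) (i : nat) : R := x (2 * i)%nat.
Definition vy (x : nat -> R) (i : nat) : R := x (S (2 * i)).

Definition in_R (p : nat) (x : nat -> R) : Prop :=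
  forall i, (p <= i)%nat -> x i = 0.

Definition is_Q (n : nat) (theta : nat -> R) (x : nat -> R) : Prop :=
  exists c : nat -> R,
    forall i, (i < n)%nat ->
      on_line (theta i) (c i) (vx x i) (vy x i) /\
      on_line (theta (nxt n i)) (c (nxt n i)) (vx x i) (vy x i).

Definition area (n : nat) (x : nat -> R) : R :=
  / 2 * sumR n (fun i => vx x i * vy x (nxt n i) - vx x (nxt n i) * vy x i).

(** Polygons modulo translations: each translation class of polygons is
   represented by its unique member whose first vertex v_0 is the origin
   (a global continuous section of the quotient by the free translation
   action, so this subset of R^(2n) is homeomorphic to the quotient). *)
Definition Stilde (n : nat) (theta : nat -> R) (x : nat -> R) : Prop :=
  in_R (2 * n) x /\ is_Q n theta x /\ vx x 0 = 0 /\ vy x 0 = 0.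

Definition Sminus n theta x : Prop := Stilde n theta x /\ area n x = -1.
Definition Splus  n theta x : Prop := Stilde n theta x /\ area n x = 1.
Definition Sconf  n theta x : Prop := Stilde n theta x /\ Rabs (area n x) = 1.

Definition dist (p : nat) (x y : nat -> R) : R :=
  sqrt (sumR p (fun i => (x i - y i) ^ 2)).

Definition cont_on (p q : nat) (A : (nat -> R) -> Prop) (f : (nat -> R) -> (nat -> R)) :=
  forall x, A x -> forall eps, 0 < eps -> exists delta, 0 < delta /\
    forall y, A y -> dist p x y < delta -> dist q (f x) (f y) < eps.

(** A ⊆ R^p and B ⊆ R^q (all sets used below consist of points of
   R^p, resp. R^q, i.e. vanish beyond the first p, resp. q, coordinates). *)
Definition homeomorphic (p : nat) (A : (nat -> R) -> Prop)
                        (q : nat) (B : (nat -> R) -> Prop) : Prop :=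
  exists (f g : (nat -> R) -> (nat -> R)),
    (forall x, A x -> B (f x)) /\ (forall y, B y -> A (g y)) /\
    (forall x, A x -> g (f x) = x) /\ (forall y, B y -> f (g y) = y) /\
    cont_on p q A f /\ cont_on q p B g.

(** S^(a-1) x D^b  ⊆ R^(a+b): the unit sphere of R^a times the open unit
   ball of R^b.  For a = 0 the sphere S^(-1) is empty; for b = 0, D^0 is a point. *)
Definition SphDisc (a b : nat) (x : nat -> R) : Prop :=
  in_R (a + b) x /\
  sumR a (fun i => x i ^ 2) = 1 /\
  sumR b (fun i => x (a + i)%nat ^ 2) < 1.

(** Disjoint union of S^(a-1) x D^b and S^(a'-1) x D^b' (with a+b = a'+b' = d)
   realised in R^(1+d): first coordinate 0 tags the first piece, 1 the second. *)
Definition shift1 (x : nat -> R) : nat -> R := fun i => x (S i).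
Definition DisjU (a b a' b' : nat) (x : nat -> R) : Prop :=
  (x 0%nat = 0 /\ SphDisc a b (shift1 x)) \/
  (x 0%nat = 1 /\ SphDisc a' b' (shift1 x)).

(* Main.v *)
Require Import Defs.
From Stdlib Require Import Reals.
From Stdlib Require Import Lra Lia Psatz FunctionalExtensionality.
Import Defs.
Open Scope R_scope.


Lemma sumR_ext n f g : (forall i, (i < n)%nat -> f i = g i) -> sumR n f = sumR n g.
Proof. induction n; simpl; intros H; auto. rewrite IHn by (intros; apply H; lia). rewrite H by lia; auto. Qed.

Lemma sumR_nonneg n f : (forall i, (i < n)%nat -> 0 <= f i) -> 0 <= sumR n f.
Proof. induction n; simpl; intros H; try lra. pose proof (H n ltac:(lia)). pose proof (IHn ltac:(intros; apply H; lia)). lra. Qed.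

Lemma sumR_plus n f g : sumR n (fun i => f i + g i) = sumR n f + sumR n g.
Proof. induction n; simpl; lra. Qed.

Lemma sumR_minus n f g : sumR n (fun i => f i - g i) = sumR n f - sumR n g.
Proof. induction n; simpl; lra. Qed.

Lemma sumR_scal n c f : sumR n (fun i => c * f i) = c * sumR n f.
Proof. induction n; simpl; lra. Qed.

Lemma sumR_zero n f : (forall i, (i < n)%nat -> f i = 0) -> sumR n f = 0.
Proof. intros H. rewrite (sumR_ext n f (fun _ => 0)) by auto. clear H. induction n; simpl; lra. Qed.

Lemma sumR_split a b f : sumR (a + b) f = sumR a f + sumR b (fun i => f (a + i)%nat).
Proof. induction b. rewrite Nat.add_0_r; simpl; ring. rewrite Nat.add_succ_r; simpl; rewrite IHb; ring. Qed.

Lemma sumR_le_term n f i : (forall j, (j < n)%nat -> 0 <= f j) -> (i < n)%nat -> f i <= sumR n f.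
Proof. induction n; simpl; intros H Hi. lia.
  destruct (Nat.eq_dec i n). subst. pose proof (sumR_nonneg n f ltac:(intros; apply H; lia)). lra.
  pose proof (IHn ltac:(intros; apply H; lia) ltac:(lia)). pose proof (H n ltac:(lia)). lra. Qed.

Lemma sumR_lt n f c : (forall i, (i < n)%nat -> f i <= c) -> sumR n f <= INR n * c.
Proof. induction n; intros H. simpl; lra. rewrite S_INR. simpl sumR. pose proof (IHn ltac:(intros; apply H; lia)). pose proof (H n ltac:(lia)). lra. Qed.

Lemma dist_nonneg p x y : 0 <= dist p x y.
Proof. apply sqrt_pos. Qed.

Lemma dist_coord p x y i : (i < p)%nat -> Rabs (x i - y i) <= dist p x y.
Proof. intros Hi. unfold dist. rewrite <- sqrt_Rsqr_abs. apply sqrt_le_1_alt.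
  unfold Rsqr. replace ((x i - y i) * (x i - y i)) with ((x i - y i)^2) by ring.
  apply (sumR_le_term p (fun j => (x j - y j)^2) i); auto. intros; apply pow2_ge_0. Qed.

Definition ctsS (p : nat) (A : (nat -> R) -> Prop) (h : (nat -> R) -> R) :=
  forall x, A x -> forall eps, 0 < eps -> exists d, 0 < d /\
    forall y, A y -> dist p x y < d -> Rabs (h x - h y) < eps.

Lemma ctsS_const p A c : ctsS p A (fun _ => c).
Proof. intros x _ eps He. exists 1; split; [lra|]. intros. rewrite Rminus_diag, Rabs_R0; auto. Qed.

Lemma ctsS_proj p A i : (i < p)%nat -> ctsS p A (fun x => x i).
Proof. intros Hi x _ eps He. exists eps; split; auto. intros y _ Hd.
  pose proof (dist_coord p x y i Hi). lra. Qed.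

Lemma ctsS_ext p A h h' : (forall x, A x -> h x = h' x) -> ctsS p A h' -> ctsS p A h.
Proof. intros E H x Ax eps He. destruct (H x Ax eps He) as [d [Hd H']]. exists d; split; auto.
  intros y Ay Hy. rewrite !E by auto. auto. Qed.

Lemma ctsS_sub p A B h : (forall x, B x -> A x) -> ctsS p A h -> ctsS p B h.
Proof. intros S H x Bx eps He. destruct (H x (S x Bx) eps He) as [d [Hd H']]. exists d; split; auto. Qed.

Lemma ctsS_plus p A h1 h2 : ctsS p A h1 -> ctsS p A h2 -> ctsS p A (fun x => h1 x + h2 x).
Proof. intros H1 H2 x Ax eps He.
  destruct (H1 x Ax (eps/2) ltac:(lra)) as [d1 [Hd1 K1]].
  destruct (H2 x Ax (eps/2) ltac:(lra)) as [d2 [Hd2 K2]].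
  exists (Rmin d1 d2); split. apply Rmin_pos; auto.
  intros y Ay Hy. pose proof (Rmin_l d1 d2); pose proof (Rmin_r d1 d2).
  specialize (K1 y Ay ltac:(lra)); specialize (K2 y Ay ltac:(lra)).
  replace (h1 x + h2 x - (h1 y + h2 y)) with ((h1 x - h1 y) + (h2 x - h2 y)) by ring.
  eapply Rle_lt_trans. apply Rabs_triang. lra. Qed.

Lemma cpt_eps g t : continuity_pt g t -> forall eps, 0 < eps -> exists d, 0 < d /\
  forall t', Rabs (t' - t) < d -> Rabs (g t - g t') < eps.
Proof. intros H eps He. destruct (H eps He) as [d [Hd K]]. exists d; split; auto.
  intros t' Ht'. destruct (Req_dec t t'). subst. rewrite Rminus_diag, Rabs_R0; auto.
  rewrite Rabs_minus_sym. apply (K t'). split. split; [exact I|auto]. exact Ht'. Qed.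

Lemma ctsS_comp p A h g : (forall x, A x -> continuity_pt g (h x)) -> ctsS p A h ->
  ctsS p A (fun x => g (h x)).
Proof. intros Hg H x Ax eps He. destruct (cpt_eps g (h x) (Hg x Ax) eps He) as [d1 [Hd1 K1]].
  destruct (H x Ax d1 Hd1) as [d [Hd K]]. exists d; split; auto. intros y Ay Hy.
  apply K1. rewrite Rabs_minus_sym. auto. Qed.

Lemma cpt_id t : continuity_pt id t.
Proof. exact (derivable_continuous_pt id t (derivable_pt_id t)). Qed.
Lemma cpt_scal c t : continuity_pt (fun s => c * s) t.
Proof. exact (continuity_pt_scal id c t (cpt_id t)). Qed.
Lemma cpt_sq t : continuity_pt (fun s => s * s) t.
Proof. exact (continuity_pt_mult id id t (cpt_id t) (cpt_id t)). Qed.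

Lemma ctsS_scal p A c h : ctsS p A h -> ctsS p A (fun x => c * h x).
Proof. intros H. apply (ctsS_comp p A h (fun s => c * s)); auto. intros; apply cpt_scal. Qed.

Lemma ctsS_opp p A h : ctsS p A h -> ctsS p A (fun x => - h x).
Proof. intros H. apply ctsS_ext with (h' := fun x => (-1) * h x). intros; ring. apply ctsS_scal; auto. Qed.

Lemma ctsS_minus p A h1 h2 : ctsS p A h1 -> ctsS p A h2 -> ctsS p A (fun x => h1 x - h2 x).
Proof. intros. apply ctsS_plus; auto. apply ctsS_opp; auto. Qed.

Lemma ctsS_mult p A h1 h2 : ctsS p A h1 -> ctsS p A h2 -> ctsS p A (fun x => h1 x * h2 x).
Proof. intros H1 H2.
  apply ctsS_ext with (h' := fun x => /4 * ((fun s => s*s) (h1 x + h2 x) - (fun s => s*s) (h1 x - h2 x))).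
  intros; field. apply ctsS_scal. apply ctsS_minus.
  apply (ctsS_comp p A (fun x => h1 x + h2 x) (fun s => s*s)). intros; apply cpt_sq. apply ctsS_plus; auto.
  apply (ctsS_comp p A (fun x => h1 x - h2 x) (fun s => s*s)). intros; apply cpt_sq. apply ctsS_minus; auto. Qed.

Lemma ctsS_sum p A m (h : nat -> (nat -> R) -> R) :
  (forall j, (j < m)%nat -> ctsS p A (h j)) -> ctsS p A (fun x => sumR m (fun j => h j x)).
Proof. induction m; intros H; simpl. apply ctsS_const.
  apply ctsS_plus. apply IHm; intros; apply H; lia. apply H; lia. Qed.

Lemma ctsS_pow2 p A h : ctsS p A h -> ctsS p A (fun x => h x ^ 2).
Proof. intros H. apply ctsS_ext with (h' := fun x => h x * h x). intros; ring. apply ctsS_mult; auto. Qed.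

Lemma coords_delta p q A f : (forall i, (i < q)%nat -> ctsS p A (fun x => f x i)) ->
  forall x, A x -> forall eps, 0 < eps -> exists d, 0 < d /\ forall y, A y -> dist p x y < d ->
   forall i, (i < q)%nat -> Rabs (f x i - f y i) < eps.
Proof. induction q; intros H x Ax eps He.
  exists 1; split; [lra|]. intros; lia.
  destruct (IHq ltac:(intros; apply H; lia) x Ax eps He) as [d1 [Hd1 K1]].
  destruct (H q ltac:(lia) x Ax eps He) as [d2 [Hd2 K2]].
  exists (Rmin d1 d2); split. apply Rmin_pos; auto.
  intros y Ay Hy i Hi. pose proof (Rmin_l d1 d2); pose proof (Rmin_r d1 d2).
  destruct (Nat.eq_dec i q). subst. apply K2; auto; lra. apply K1; auto; lia || lra. Qed.

Lemma cont_of_coords p q A f : (forall i, (i < q)%nat -> ctsS p A (fun x => f x i)) -> cont_on p q A f.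
Proof. intros H x Ax eps He.
  set (e' := eps / (INR q + 1)).
  assert (Hq : 0 < INR q + 1) by (pose proof (pos_INR q); lra).
  assert (He' : 0 < e') by (unfold e'; apply Rdiv_lt_0_compat; lra).
  destruct (coords_delta p q A f H x Ax e' He') as [d [Hd K]]. exists d; split; auto.
  intros y Ay Hy. unfold dist.
  assert (S1 : sumR q (fun i => (f x i - f y i) ^ 2) <= INR q * (e' * e')).
  { apply sumR_lt. intros i Hi. specialize (K y Ay Hy i Hi).
    pose proof (Rabs_pos (f x i - f y i)). rewrite <- (pow2_abs (f x i - f y i)). nra. }
  assert (S2 : INR q * (e' * e') < eps * eps).
  { assert (eps = e' * (INR q + 1)) by (unfold e'; field; lra). rewrite H0. pose proof (pos_INR q). nra. }
  rewrite <- (sqrt_square eps) by lra. apply sqrt_lt_1_alt. split. apply sumR_nonneg; intros; apply pow2_ge_0. lra. Qed.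

Lemma homeo_trans p A q B r C : homeomorphic p A q B -> homeomorphic q B r C -> homeomorphic p A r C.
Proof. intros [f1 [g1 [a1 [b1 [c1 [d1 [e1 h1]]]]]]] [f2 [g2 [a2 [b2 [c2 [d2 [e2 h2]]]]]]].
  exists (fun x => f2 (f1 x)), (fun z => g1 (g2 z)). repeat split; intros; auto.
  rewrite c2; auto. rewrite d1; auto.
  - intros x Ax eps He. destruct (e2 (f1 x) (a1 x Ax) eps He) as [d [Hd K]].
    destruct (e1 x Ax d Hd) as [d' [Hd' K']]. exists d'; split; auto.
  - intros x Ax eps He. destruct (h1 (g2 x) (b2 x Ax) eps He) as [d [Hd K]].
    destruct (h2 x Ax d Hd) as [d' [Hd' K']]. exists d'; split; auto. Qed.


Lemma sumR_sq_scal n (z : nat -> R) c : sumR n (fun i => (z i * c) ^ 2) = c ^ 2 * sumR n (fun i => z i ^ 2).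
Proof. rewrite <- sumR_scal. apply sumR_ext; intros; ring. Qed.

Lemma cpt_invsqrt t : 0 < t -> continuity_pt (fun s => / sqrt s) t.
Proof. intros Ht. apply (continuity_pt_inv sqrt t). apply continuity_pt_sqrt; lra.
  pose proof (sqrt_lt_R0 t Ht); lra. Qed.

Lemma ctsS_invsqrt p A h : (forall x, A x -> 0 < h x) -> ctsS p A h -> ctsS p A (fun x => / sqrt (h x)).
Proof. intros P H. apply (ctsS_comp p A h (fun s => / sqrt s)); auto. intros; apply cpt_invsqrt; auto. Qed.

Definition Hyp (a b : nat) (z : nat -> R) : Prop :=
  in_R (a + b) z /\ sumR a (fun i => z i ^ 2) - sumR b (fun i => z (a + i)%nat ^ 2) = 1.

Definition hB (a b : nat) (z : nat -> R) := sumR b (fun j => z (a + j)%nat ^ 2).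

Lemma hB_nonneg a b z : 0 <= hB a b z.
Proof. apply sumR_nonneg; intros; apply pow2_ge_0. Qed.

Definition hf a b z : nat -> R := fun i => z i * / sqrt (1 + hB a b z).
Definition hg a b w : nat -> R := fun i => w i * / sqrt (1 - hB a b w).

Lemma hyp_sph a b : homeomorphic (a + b) (Hyp a b) (a + b) (SphDisc a b).
Proof.
  exists (hf a b), (hg a b).
  assert (F1 : forall z, Hyp a b z -> hB a b (hf a b z) = (/ sqrt (1 + hB a b z)) ^ 2 * hB a b z).
  { intros z _. unfold hB, hf. apply sumR_sq_scal. }
  assert (G1 : forall w, SphDisc a b w -> hB a b (hg a b w) = (/ sqrt (1 - hB a b w)) ^ 2 * hB a b w).
  { intros w _. unfold hB, hg. apply sumR_sq_scal. }
  split; [|split; [|split; [|split]]].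
  - intros z [Hz1 Hz2]. pose proof (hB_nonneg a b z) as HB.
    set (s := sqrt (1 + hB a b z)). assert (Hs : s * s = 1 + hB a b z) by (apply sqrt_sqrt; lra).
    assert (Hs0 : 0 < s) by (apply sqrt_lt_R0; lra).
    split; [|split].
    + intros i Hi. unfold hf. rewrite Hz1 by auto. ring.
    + unfold hf. rewrite sumR_sq_scal. fold s. fold (hB a b z) in Hz2. 
      replace (sumR a (fun i => z i ^ 2)) with (1 + hB a b z) by lra. rewrite <- Hs. field. lra.
    + change (hB a b (hf a b z) < 1). rewrite F1 by (split; auto). fold s.
      assert (E : (/ s) ^ 2 = / (1 + hB a b z)) by (rewrite <- Hs; field; lra).
      rewrite E. apply (Rmult_lt_reg_l (1 + hB a b z)); [lra|].
      rewrite <- Rmult_assoc, Rinv_r by lra. lra.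
  - intros w [Hw1 [Hw2 Hw3]]. fold (hB a b w) in Hw3. pose proof (hB_nonneg a b w) as HB.
    set (r := sqrt (1 - hB a b w)). assert (Hr : r * r = 1 - hB a b w) by (apply sqrt_sqrt; lra).
    assert (Hr0 : 0 < r) by (apply sqrt_lt_R0; lra).
    split.
    + intros i Hi. unfold hg. rewrite Hw1 by auto. ring.
    + unfold hg. rewrite sumR_sq_scal. fold r. 
      rewrite (sumR_sq_scal b (fun i => w (a + i)%nat)). fold (hB a b w). rewrite Hw2.
      replace ((/ r) ^ 2 * 1 - (/ r) ^ 2 * hB a b w) with ((/ r) ^ 2 * (1 - hB a b w)) by ring.
      rewrite <- Hr. field; lra.
  - intros z Hz. pose proof (hB_nonneg a b z) as HB. unfold hg at 1. rewrite F1 by auto. apply functional_extensionality; intros i.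
    set (s := sqrt (1 + hB a b z)). assert (Hs : s * s = 1 + hB a b z) by (apply sqrt_sqrt; lra).
    assert (Hs0 : 0 < s) by (apply sqrt_lt_R0; lra).
    assert (E : 1 - (/ s) ^ 2 * hB a b z = (/ s) ^ 2) by (replace (hB a b z) with (s*s-1) by lra; field; lra).
    unfold hf. fold s. rewrite E. rewrite sqrt_pow2 by (left; apply Rinv_0_lt_compat; lra).
    field; lra.
  - intros w Hw. destruct Hw as [Hw1 [Hw2 Hw3]]. fold (hB a b w) in Hw3.
    pose proof (hB_nonneg a b w) as HB. unfold hf at 1. rewrite G1 by (split; auto). apply functional_extensionality; intros i.
    set (r := sqrt (1 - hB a b w)). assert (Hr : r * r = 1 - hB a b w) by (apply sqrt_sqrt; lra).
    assert (Hr0 : 0 < r) by (apply sqrt_lt_R0; lra).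
    assert (E : 1 + (/ r) ^ 2 * hB a b w = (/ r) ^ 2) by (replace (hB a b w) with (1 - r*r) by lra; field; lra).
    unfold hg. fold r. rewrite E. rewrite sqrt_pow2 by (left; apply Rinv_0_lt_compat; lra).
    field; lra.
  - split; apply cont_of_coords; intros i Hi.
    + apply ctsS_mult. apply ctsS_proj; auto. apply ctsS_invsqrt.
      intros z _; pose proof (hB_nonneg a b z); lra.
      apply ctsS_plus. apply ctsS_const. unfold hB. apply ctsS_sum. intros; apply ctsS_pow2, ctsS_proj; lia.
    + apply ctsS_mult. apply ctsS_proj; auto. apply ctsS_invsqrt.
      intros w [_ [_ H3]]; unfold hB; lra.
      apply ctsS_minus. apply ctsS_const. unfold hB. apply ctsS_sum. intros; apply ctsS_pow2, ctsS_proj; lia.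
Qed.


Fixpoint npos (e : nat -> R) (m : nat) : nat :=
  match m with O => O | S m' => if Rlt_dec 0 (e m') then S (npos e m') else npos e m' end.

Lemma npos_le e m : (npos e m <= m)%nat.
Proof. induction m; simpl; auto. destruct (Rlt_dec 0 (e m)); lia. Qed.

Definition ins (p : nat) (v : R) (z : nat -> R) : nat -> R :=
  fun i => if Nat.ltb i p then z i else if Nat.eqb i p then v else z (i - 1)%nat.
Definition upd (p : nat) (v : R) (z : nat -> R) : nat -> R :=
  fun i => if Nat.eqb i p then v else z i.
Definition del (p : nat) (z : nat -> R) : nat -> R :=
  fun i => if Nat.ltb i p then z i else z (S i).
Definition trunc (m : nat) (z : nat -> R) : nat -> R := fun i => if Nat.ltb i m then z i else 0.

Fixpoint PF (e : nat -> R) (m : nat) (psi : nat -> R) : nat -> R :=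
  match m with
  | O => fun _ => 0
  | S m' => if Rlt_dec 0 (e m') then ins (npos e m') (psi m') (PF e m' psi)
            else upd m' (psi m') (PF e m' psi)
  end.

Fixpoint PG (e : nat -> R) (m : nat) (z : nat -> R) : nat -> R :=
  match m with
  | O => fun _ => 0
  | S m' => if Rlt_dec 0 (e m') then upd m' (z (npos e m')) (PG e m' (del (npos e m') z))
            else upd m' (z m') (PG e m' z)
  end.

Ltac nb := repeat match goal with
  | |- context [Nat.ltb ?a ?b] => destruct (Nat.ltb_spec a b)
  | |- context [Nat.eqb ?a ?b] => destruct (Nat.eqb_spec a b)
  end.

Lemma PG_in e m z : in_R m (PG e m z).
Proof. revert z; induction m; intros z i Hi; simpl; auto.
  destruct (Rlt_dec 0 (e m)); unfold upd; nb; try lia; apply IHm; lia. Qed.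

Lemma PF_in e m psi : in_R m (PF e m psi).
Proof. induction m; intros i Hi; simpl; auto. pose proof (npos_le e m).
  destruct (Rlt_dec 0 (e m)); unfold upd, ins; nb; try lia; apply IHm; lia. Qed.

Lemma PG_local e m z z' : (forall i, (i < m)%nat -> z i = z' i) -> PG e m z = PG e m z'.
Proof. revert z z'; induction m; intros z z' H; simpl; auto. pose proof (npos_le e m).
  destruct (Rlt_dec 0 (e m)).
  - rewrite H by lia. f_equal. apply IHm. intros i Hi; unfold del; nb; apply H; lia.
  - rewrite H by lia. f_equal. apply IHm. intros; apply H; lia. Qed.

Lemma PF_local e m z z' : (forall i, (i < m)%nat -> z i = z' i) -> PF e m z = PF e m z'.
Proof. revert z z'; induction m; intros z z' H; simpl; auto.
  rewrite H by lia. rewrite (IHm z z') by (intros; apply H; lia). auto. Qed.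

Lemma PGF e m psi : PG e m (PF e m psi) = trunc m psi.
Proof. induction m; simpl. apply functional_extensionality; intros; unfold trunc; nb; lia || auto.
  pose proof (npos_le e m). destruct (Rlt_dec 0 (e m)).
  - assert (E1 : ins (npos e m) (psi m) (PF e m psi) (npos e m) = psi m) by (unfold ins; nb; lia || auto).
    rewrite E1. assert (E2 : del (npos e m) (ins (npos e m) (psi m) (PF e m psi)) = PF e m psi).
    { apply functional_extensionality; intros i; unfold del, ins; nb; try lia; auto. f_equal; lia. }
    rewrite E2, IHm. apply functional_extensionality; intros i; unfold upd, trunc; nb; subst; auto; lia.
  - assert (E1 : upd m (psi m) (PF e m psi) m = psi m) by (unfold upd; nb; lia || auto).
    rewrite E1. rewrite (PG_local e m _ (PF e m psi)) by (intros; unfold upd; nb; lia || auto).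
    rewrite IHm. apply functional_extensionality; intros i; unfold upd, trunc; nb; subst; auto; lia. Qed.

Lemma PFG e m z : PF e m (PG e m z) = trunc m z.
Proof. revert z; induction m; intros z; simpl. apply functional_extensionality; intros; unfold trunc; nb; lia || auto.
  pose proof (npos_le e m). destruct (Rlt_dec 0 (e m)).
  - unfold upd at 1. nb; try lia.
    rewrite (PF_local e m _ (PG e m (del (npos e m) z))) by (intros; unfold upd; nb; lia || auto).
    rewrite IHm. apply functional_extensionality; intros i; unfold ins, trunc, del; nb; subst; auto; try lia.
    f_equal; lia.
  - unfold upd at 1. nb; try lia.
    rewrite (PF_local e m _ (PG e m z)) by (intros; unfold upd; nb; lia || auto).
    rewrite IHm. apply functional_extensionality; intros i; unfold upd, trunc; nb; subst; auto; lia. Qed.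

Lemma sumR_S n f : sumR (S n) f = sumR n f + f n.
Proof. reflexivity. Qed.

Lemma PF_sum e m psi : (forall j, (j < m)%nat -> e j = 1 \/ e j = -1) ->
  sumR (npos e m) (fun i => PF e m psi i ^ 2) - sumR (m - npos e m) (fun i => PF e m psi (npos e m + i)%nat ^ 2)
  = sumR m (fun j => e j * psi j ^ 2).
Proof. induction m; intros He; [simpl; lra|]. pose proof (npos_le e m).
  specialize (IHm ltac:(intros; apply He; lia)).
  change (npos e (S m)) with (if Rlt_dec 0 (e m) then S (npos e m) else npos e m).
  change (PF e (S m) psi) with (if Rlt_dec 0 (e m) then ins (npos e m) (psi m) (PF e m psi)
            else upd m (psi m) (PF e m psi)).
  rewrite (sumR_S m).
  destruct (Rlt_dec 0 (e m)).
  - assert (e m = 1) by (destruct (He m ltac:(lia)); lra). rewrite sumR_S.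
    rewrite (sumR_ext (npos e m) _ (fun i => PF e m psi i ^ 2)) by (intros; unfold ins; nb; lia || auto).
    assert (E : ins (npos e m) (psi m) (PF e m psi) (npos e m) = psi m) by (unfold ins; nb; lia || auto).
    rewrite E.
    rewrite (sumR_ext (S m - S (npos e m)) _ (fun i => PF e m psi (npos e m + i)%nat ^ 2)).
    replace (S m - S (npos e m))%nat with (m - npos e m)%nat by lia. rewrite H0. lra.
    intros; unfold ins; nb; try lia. do 2 f_equal; lia.
  - assert (e m = -1) by (destruct (He m ltac:(lia)); lra).
    replace (S m - npos e m)%nat with (S (m - npos e m)) by lia. rewrite sumR_S.
    rewrite (sumR_ext (npos e m) _ (fun i => PF e m psi i ^ 2)) by (intros; unfold upd; nb; lia || auto).
    rewrite (sumR_ext (m - npos e m) _ (fun i => PF e m psi (npos e m + i)%nat ^ 2)) by (intros; unfold upd; nb; lia || auto).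
    assert (E : upd m (psi m) (PF e m psi) (npos e m + (m - npos e m))%nat = psi m) by (unfold upd; nb; lia || auto).
    rewrite E, H0. lra. Qed.

Lemma PF_coord e m i : (exists j, (j < m)%nat /\ forall psi, PF e m psi i = psi j) \/ (forall psi, PF e m psi i = 0).
Proof. revert i; induction m; intros i; simpl; [right; auto|]. pose proof (npos_le e m).
  destruct (Rlt_dec 0 (e m)); unfold ins, upd; nb.
  - destruct (IHm i) as [[j [Hj K]]|K]; [left; exists j; split; auto; lia | right; auto].
  - left; exists m; split; auto.
  - destruct (IHm (i-1)%nat) as [[j [Hj K]]|K]; [left; exists j; split; auto; lia | right; auto].
  - left; exists m; split; auto.
  - destruct (IHm i) as [[j [Hj K]]|K]; [left; exists j; split; auto; lia | right; auto]. Qed.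

Lemma PG_coord e m i : (exists j, (j < m)%nat /\ forall z, PG e m z i = z j) \/ (forall z, PG e m z i = 0).
Proof. revert i; induction m; intros i; simpl; [right; auto|]. pose proof (npos_le e m).
  destruct (Rlt_dec 0 (e m)); unfold upd; nb.
  - left; exists (npos e m); split; auto; lia.
  - destruct (IHm i) as [[j [Hj K]]|K].
    + unfold del in K. destruct (Nat.ltb_spec j (npos e m)).
      * left; exists j; split; [lia|]. intros z; rewrite K. unfold del; nb; auto; lia.
      * left; exists (S j); split; [lia|]. intros z; rewrite K. unfold del; nb; auto; lia.
    + right; auto.
  - left; exists m; split; auto.
  - destruct (IHm i) as [[j [Hj K]]|K]; [left; exists j; split; auto; lia | right; auto]. Qed.

Definition Tq (m : nat) (e : nat -> R) (psi : nat -> R) : Prop :=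
  in_R m psi /\ sumR m (fun j => e j * psi j ^ 2) = 1.

Lemma trunc_in m z : in_R m z -> trunc m z = z.
Proof. intros H; apply functional_extensionality; intros i; unfold trunc; nb; auto. rewrite H; auto; lia. Qed.

Lemma perm_homeo m e : (forall j, (j < m)%nat -> e j = 1 \/ e j = -1) ->
  homeomorphic m (Tq m e) m (Hyp (npos e m) (m - npos e m)).
Proof. intros He. pose proof (npos_le e m).
  exists (PF e m), (PG e m). split; [|split; [|split; [|split; [|split]]]].
  - intros psi [H1 H2]. split. replace (npos e m + (m - npos e m))%nat with m by lia. apply PF_in.
    rewrite PF_sum; auto.
  - intros z [H1 H2]. split. apply PG_in.
    rewrite <- PF_sum by auto. rewrite PFG. rewrite trunc_in; auto.
    replace m with (npos e m + (m - npos e m))%nat at 1 by lia; auto.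
  - intros psi [H1 _]. rewrite PGF. apply trunc_in; auto.
  - intros z [H1 _]. rewrite PFG. apply trunc_in. replace m with (npos e m + (m - npos e m))%nat at 1 by lia; auto.
  - apply cont_of_coords; intros i Hi. destruct (PF_coord e m i) as [[j [Hj K]]|K].
    apply ctsS_ext with (h' := fun x => x j). intros; auto. apply ctsS_proj; auto.
    apply ctsS_ext with (h' := fun _ => 0). intros; auto. apply ctsS_const.
  - apply cont_of_coords; intros i Hi. destruct (PG_coord e m i) as [[j [Hj K]]|K].
    apply ctsS_ext with (h' := fun x => x j). intros; auto. apply ctsS_proj; auto.
    apply ctsS_ext with (h' := fun _ => 0). intros; auto. apply ctsS_const. Qed.


Definition gg (th : nat -> R) (x : nat -> R) (j : nat) := cos (th 0%nat) * vy x j - sin (th 0%nat) * vx x j.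
Definition pp (th : nat -> R) (j : nat) := cos (th 0%nat) * sin (th j) - sin (th 0%nat) * cos (th j).
Definition qq (th : nat -> R) (j : nat) := cos (th j) * sin (th (S j)) - sin (th j) * cos (th (S j)).
Definition kap (th : nat -> R) (j : nat) := - qq th j / (2 * (pp th j * pp th (S j))).
Definition crv (x : nat -> R) (i j : nat) := vx x i * vy x j - vx x j * vy x i.

Lemma key (c0 s0 cm sm cn sn X Y l : R) :
  c0*sm - s0*cm <> 0 -> c0*sn - s0*cn <> 0 ->
  X*(Y + l * sn) - (X + l * cn)*Y = - (c0*Y - s0*X)^2 * (cm*sn - sm*cn) / ((c0*sm - s0*cm)*(c0*sn - s0*cn))
    + (c0*(Y + l * sn) - s0*(X + l * cn))/(c0*sn - s0*cn) * ((X + l * cn)*sn - cn*(Y + l * sn)) - (c0*Y - s0*X)/(c0*sm - s0*cm) * (X*sm - cm*Y).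
Proof. intros H1 H2. field. split; auto. Qed.

Lemma par_decomp c s dx dy : c^2 + s^2 = 1 -> c * dy - s * dx = 0 ->
  dx = (c * dx + s * dy) * c /\ dy = (c * dx + s * dy) * s.
Proof. intros H1 H2. assert (H : c * dy = s * dx) by lra. split.
  replace ((c*dx+s*dy)*c) with (c^2*dx + s*(c*dy)) by ring. rewrite H.
  replace (c^2*dx + s*(s*dx)) with ((c^2+s^2)*dx) by ring. rewrite H1; ring.
  replace ((c*dx+s*dy)*s) with (c*(s*dx) + s^2*dy) by ring. rewrite <- H.
  replace (c*(c*dy) + s^2*dy) with ((c^2+s^2)*dy) by ring. rewrite H1; ring. Qed.

Lemma nxt_mid n i : (S i < n)%nat -> nxt n i = S i.
Proof. intros H; unfold nxt; apply Nat.mod_small; auto. Qed.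
Lemma nxt_last n : (0 < n)%nat -> nxt n (n - 1) = 0%nat.
Proof. intros H; unfold nxt. replace (S (n - 1)) with n by lia. apply Nat.Div0.mod_same. Qed.

Lemma area_mid n x : (3 <= n)%nat -> vx x 0 = 0 -> vy x 0 = 0 ->
  area n x = / 2 * sumR (n - 2) (fun i => crv x (S i) (S (S i))).
Proof. intros Hn H0 H1. unfold area. f_equal.
  replace n with (1 + S (n - 2))%nat at 1 by lia. rewrite sumR_split. simpl sumR at 1.
  rewrite sumR_S. rewrite H0, H1.
  replace (1 + (n-2))%nat with (n - 1)%nat by lia. rewrite nxt_last by lia. rewrite H0, H1.
  rewrite (sumR_ext (n-2) _ (fun i => crv x (S i) (S (S i)))). ring.
  intros i Hi. simpl. rewrite nxt_mid by lia. reflexivity. Qed.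

Lemma Q_par n th x : is_Q n th x -> forall i, (S i < n)%nat ->
  cos (th (S i)) * (vy x (S i) - vy x i) - sin (th (S i)) * (vx x (S i) - vx x i) = 0.
Proof. intros [c H] i Hi. destruct (H i ltac:(lia)) as [_ A1]. destruct (H (S i) Hi) as [A2 _].
  rewrite nxt_mid in A1 by auto. unfold on_line in *. lra. Qed.

Lemma Q_last n th x : (0 < n)%nat -> is_Q n th x -> vx x 0 = 0 -> vy x 0 = 0 -> gg th x (n - 1) = 0.
Proof. intros Hn [c H] H0 H1. destruct (H (n-1)%nat ltac:(lia)) as [_ A1]. destruct (H 0%nat Hn) as [A2 _].
  rewrite nxt_last in A1 by auto. unfold on_line, gg in *. rewrite H0, H1 in A2. lra. Qed.

Section Pol.
Variable n : nat.
Variable th : nat -> R.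
Hypothesis Hn : (3 <= n)%nat.
Hypothesis Hpp : forall j, (1 <= j)%nat -> (j < n)%nat -> pp th j <> 0.
Hypothesis Hqq : forall j, (1 <= j)%nat -> (S j < n)%nat -> qq th j <> 0.

Lemma area_ind x : Stilde n th x -> forall m, (S (S m) <= n)%nat ->
  sumR m (fun i => crv x (S i) (S (S i))) = sumR m (fun i => 2 * kap th (S i) * gg th x (S i) ^ 2)
   + gg th x (S m) / pp th (S m) * (vx x (S m) * sin (th (S m)) - cos (th (S m)) * vy x (S m)).
Proof. intros [Hin [HQ [H0 H1]]] m. induction m; intros Hm.
  - simpl. pose proof (Q_par n th x HQ 0 ltac:(lia)) as P. rewrite H0, H1 in P.
    replace (vx x 1 * sin (th 1%nat) - cos (th 1%nat) * vy x 1) with 0 by lra. ring.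
  - rewrite !sumR_S. rewrite IHm by lia.
    pose proof (Q_par n th x HQ (S m) ltac:(lia)) as P.
    destruct (par_decomp (cos (th (S (S m)))) (sin (th (S (S m)))) (vx x (S (S m)) - vx x (S m)) (vy x (S (S m)) - vy x (S m))
      ltac:(rewrite <- (sin2_cos2 (th (S (S m)))); unfold Rsqr; ring) ltac:(lra)) as [E1 E2].
    set (l := cos (th (S (S m))) * (vx x (S (S m)) - vx x (S m)) + sin (th (S (S m))) * (vy x (S (S m)) - vy x (S m))) in *.
    assert (X1 : vx x (S (S m)) = vx x (S m) + l * cos (th (S (S m)))) by lra.
    assert (Y1 : vy x (S (S m)) = vy x (S m) + l * sin (th (S (S m)))) by lra.
    unfold crv, gg, kap, qq. unfold pp in *. rewrite X1, Y1.
    rewrite (key _ _ _ _ _ _ _ _ l (Hpp (S m) ltac:(lia) ltac:(lia)) (Hpp (S (S m)) ltac:(lia) ltac:(lia))).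
    field. split; [apply (Hpp (S (S m))); lia | apply (Hpp (S m)); lia]. Qed.

Lemma area_formula x : Stilde n th x -> area n x = sumR (n - 2) (fun i => kap th (S i) * gg th x (S i) ^ 2).
Proof. intros HS. pose proof HS as [Hin [HQ [H0 H1]]]. rewrite area_mid by auto.
  rewrite (area_ind x HS (n - 2)) by lia. replace (S (n - 2)) with (n - 1)%nat by lia.
  rewrite (Q_last n th x) by (auto; lia). unfold Rdiv. rewrite Rmult_0_l, Rmult_0_l, Rplus_0_r.
  rewrite (sumR_ext _ _ (fun i => 2 * (kap th (S i) * gg th x (S i) ^ 2))) by (intros; ring).
  rewrite sumR_scal. field. Qed.


Definition sq j := sqrt (Rabs (kap th j)).
Definition epsv i := if Rlt_dec 0 (kap th (S i)) then 1 else -1.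
Definition Fpol (x : nat -> R) : nat -> R := fun i => if Nat.ltb i (n - 2) then sq (S i) * gg th x (S i) else 0.
Definition Gc (psi : nat -> R) (j : nat) : R :=
  match j with O => 0 | S j' => if Nat.ltb j' (n - 2) then psi j' * / sq (S j') else 0 end.
Definition VX psi j := sumR j (fun i => (Gc psi (S i) - Gc psi i) / pp th (S i) * cos (th (S i))).
Definition VY psi j := sumR j (fun i => (Gc psi (S i) - Gc psi i) / pp th (S i) * sin (th (S i))).
Definition Gpol (psi : nat -> R) : nat -> R :=
  fun i => if Nat.ltb i (2 * n) then (if Nat.even i then VX psi (Nat.div2 i) else VY psi (Nat.div2 i)) else 0.

Lemma kap_nz j : (1 <= j)%nat -> (S j < n)%nat -> kap th j <> 0.
Proof. intros H1 H2. unfold kap. pose proof (Hqq j H1 H2). pose proof (Hpp j H1 ltac:(lia)).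
  pose proof (Hpp (S j) ltac:(lia) H2). unfold Rdiv. apply Rmult_integral_contrapositive; split.
  lra. apply Rinv_neq_0_compat. apply Rmult_integral_contrapositive; split. lra.
  apply Rmult_integral_contrapositive; split; auto. Qed.

Lemma sq_pos j : (1 <= j)%nat -> (S j < n)%nat -> 0 < sq j.
Proof. intros. unfold sq. apply sqrt_lt_R0. apply Rabs_pos_lt. apply kap_nz; auto. Qed.

Lemma kap_eq i : (i < n - 2)%nat -> kap th (S i) = epsv i * sq (S i) ^ 2.
Proof. intros Hi. unfold epsv, sq. rewrite <- Rsqr_pow2, Rsqr_sqrt by apply Rabs_pos.
  destruct (Rlt_dec 0 (kap th (S i))). rewrite Rabs_right by lra; ring.
  pose proof (kap_nz (S i) ltac:(lia) ltac:(lia)). rewrite Rabs_left by lra; ring. Qed.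

Lemma epsv_pm i : epsv i = 1 \/ epsv i = -1.
Proof. unfold epsv; destruct (Rlt_dec 0 (kap th (S i))); auto. Qed.

Lemma vxG psi j : (j < n)%nat -> vx (Gpol psi) j = VX psi j.
Proof. intros Hj. unfold vx, Gpol. destruct (Nat.ltb_spec (2 * j) (2 * n)); [|lia].
  rewrite Nat.even_even, Nat.div2_double. auto. Qed.

Lemma vyG psi j : (j < n)%nat -> vy (Gpol psi) j = VY psi j.
Proof. intros Hj. unfold vy, Gpol. destruct (Nat.ltb_spec (S (2 * j)) (2 * n)); [|lia].
  rewrite Nat.even_succ, Nat.odd_even, Nat.div2_succ_double. auto. Qed.

Lemma ggV psi j : (j <= n - 1)%nat -> cos (th 0%nat) * VY psi j - sin (th 0%nat) * VX psi j = Gc psi j.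
Proof. induction j; intros Hj. unfold VX, VY; simpl; ring.
  unfold VX, VY in *. rewrite !sumR_S. 
  replace (cos (th 0%nat) * (sumR j (fun i => (Gc psi (S i) - Gc psi i) / pp th (S i) * sin (th (S i))) +
     (Gc psi (S j) - Gc psi j) / pp th (S j) * sin (th (S j))) -
   sin (th 0%nat) * (sumR j (fun i => (Gc psi (S i) - Gc psi i) / pp th (S i) * cos (th (S i))) +
     (Gc psi (S j) - Gc psi j) / pp th (S j) * cos (th (S j))))
  with ((cos (th 0%nat) * sumR j (fun i => (Gc psi (S i) - Gc psi i) / pp th (S i) * sin (th (S i))) -
   sin (th 0%nat) * sumR j (fun i => (Gc psi (S i) - Gc psi i) / pp th (S i) * cos (th (S i)))) +
   (Gc psi (S j) - Gc psi j) / pp th (S j) * pp th (S j)) by (unfold pp; ring).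
  rewrite IHj by lia. field. apply Hpp; lia. Qed.

Lemma Gc_last psi : Gc psi (n - 1) = 0.
Proof. replace (n - 1)%nat with (S (n - 2)) by lia. simpl. destruct (Nat.ltb_spec (n-2) (n-2)); auto; lia. Qed.

Lemma Gpol_S psi : Stilde n th (Gpol psi).
Proof. split; [|split; [|split]].
  - intros i Hi. unfold Gpol. destruct (Nat.ltb_spec i (2 * n)); auto; lia.
  - exists (fun i => cos (th i) * VY psi i - sin (th i) * VX psi i). intros i Hi.
    unfold on_line. rewrite vxG, vyG by auto. split; auto.
    destruct (Nat.eq_dec i (n - 1)).
    + subst i. rewrite nxt_last by lia. rewrite ggV by lia. rewrite Gc_last.
      unfold VX, VY; simpl; ring.
    + rewrite nxt_mid by lia. unfold VX, VY. rewrite !sumR_S. ring.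
  - rewrite vxG by lia. reflexivity.
  - rewrite vyG by lia. reflexivity. Qed.

Lemma gg_G psi j : (j < n)%nat -> gg th (Gpol psi) j = Gc psi j.
Proof. intros Hj. unfold gg. rewrite vxG, vyG by auto. apply ggV; lia. Qed.

Lemma FG psi : in_R (n - 2) psi -> Fpol (Gpol psi) = psi.
Proof. intros Hin. apply functional_extensionality; intros i. unfold Fpol.
  destruct (Nat.ltb_spec i (n - 2)).
  - rewrite gg_G by lia. simpl. destruct (Nat.ltb_spec i (n-2)); [|lia].
    pose proof (sq_pos (S i) ltac:(lia) ltac:(lia)). field. lra.
  - rewrite Hin; auto. Qed.

Lemma Gc_F x : Stilde n th x -> forall j, (j <= n - 1)%nat -> Gc (Fpol x) j = gg th x j.
Proof. intros HS j Hj. pose proof HS as [Hin [HQ [H0 H1]]]. destruct j.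
  - simpl. unfold gg. rewrite H0, H1. ring.
  - simpl. destruct (Nat.ltb_spec j (n - 2)).
    + unfold Fpol. destruct (Nat.ltb_spec j (n - 2)); [|lia].
      pose proof (sq_pos (S j) ltac:(lia) ltac:(lia)). field. lra.
    + replace (S j) with (n - 1)%nat by lia. rewrite (Q_last n th x) by (auto; lia). auto. Qed.

Lemma VF x : Stilde n th x -> forall j, (j < n)%nat -> VX (Fpol x) j = vx x j /\ VY (Fpol x) j = vy x j.
Proof. intros HS. pose proof HS as [Hin [HQ [H0 H1]]]. induction j; intros Hj.
  - unfold VX, VY; simpl; auto.
  - destruct (IHj ltac:(lia)) as [I1 I2]. unfold VX, VY in *. rewrite !sumR_S. rewrite I1, I2.
    rewrite !Gc_F by (auto; lia).
    pose proof (Q_par n th x HQ j Hj) as P.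
    destruct (par_decomp (cos (th (S j))) (sin (th (S j))) (vx x (S j) - vx x j) (vy x (S j) - vy x j)
      ltac:(rewrite <- (sin2_cos2 (th (S j))); unfold Rsqr; ring) ltac:(lra)) as [E1 E2].
    set (l := cos (th (S j)) * (vx x (S j) - vx x j) + sin (th (S j)) * (vy x (S j) - vy x j)) in *.
    assert (L : (gg th x (S j) - gg th x j) / pp th (S j) = l).
    { unfold gg, pp. replace (cos (th 0%nat) * vy x (S j) - sin (th 0%nat) * vx x (S j) -
        (cos (th 0%nat) * vy x j - sin (th 0%nat) * vx x j)) with
        (cos (th 0%nat) * (vy x (S j) - vy x j) - sin (th 0%nat) * (vx x (S j) - vx x j)) by ring.
      rewrite E1, E2 at 1. pose proof (Hpp (S j) ltac:(lia) Hj). unfold pp in H. field. auto. }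
    rewrite L. split; lra. Qed.

Lemma GF x : Stilde n th x -> Gpol (Fpol x) = x.
Proof. intros HS. pose proof HS as [Hin [HQ [H0 H1]]]. apply functional_extensionality; intros i.
  unfold Gpol. destruct (Nat.ltb_spec i (2 * n)).
  - pose proof (Nat.div2_odd i) as Ei. rewrite <- Nat.negb_even in Ei.
    assert (Hd : (Nat.div2 i < n)%nat) by (destruct (Nat.even i); simpl in Ei; lia).
    destruct (VF x HS (Nat.div2 i) Hd) as [V1 V2].
    destruct (Nat.even i); simpl in Ei.
    + rewrite V1. unfold vx. f_equal. lia.
    + rewrite V2. unfold vy. f_equal. lia.
  - rewrite Hin; auto. Qed.

Lemma area_G psi : area n (Gpol psi) = sumR (n - 2) (fun i => epsv i * psi i ^ 2).
Proof. rewrite area_formula by apply Gpol_S. apply sumR_ext; intros i Hi.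
  rewrite gg_G by lia. simpl. destruct (Nat.ltb_spec i (n - 2)); [|lia]. rewrite kap_eq by auto.
  pose proof (sq_pos (S i) ltac:(lia) ltac:(lia)). field. lra. Qed.

Lemma area_F x : Stilde n th x -> area n x = sumR (n - 2) (fun i => epsv i * Fpol x i ^ 2).
Proof. intros HS. rewrite area_formula by auto. apply sumR_ext; intros i Hi.
  unfold Fpol. destruct (Nat.ltb_spec i (n - 2)); [|lia]. rewrite kap_eq by auto. ring. Qed.

Lemma ctsS_Gc A j : ctsS (n - 2) A (fun psi => Gc psi j).
Proof. destruct j; simpl. apply ctsS_const. destruct (Nat.ltb_spec j (n - 2)).
  apply ctsS_mult. apply ctsS_proj; auto. apply ctsS_const. apply ctsS_const. Qed.

Lemma ctsS_V A j (f : nat -> R) : ctsS (n - 2) A (fun psi => sumR j (fun i => (Gc psi (S i) - Gc psi i) / pp th (S i) * f i)).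
Proof. apply (ctsS_sum (n-2) A j (fun i psi => (Gc psi (S i) - Gc psi i) / pp th (S i) * f i)).
  intros i Hi. apply ctsS_mult; [|apply ctsS_const]. unfold Rdiv. apply ctsS_mult; [|apply ctsS_const].
  apply ctsS_minus; apply ctsS_Gc. Qed.

Lemma pol_homeo c : c * c = 1 ->
  homeomorphic (2 * n) (fun x => Stilde n th x /\ area n x = c) (n - 2) (Tq (n - 2) (fun i => c * epsv i)).
Proof. intros Hc. exists Fpol, Gpol. split; [|split; [|split; [|split; [|split]]]].
  - intros x [HS HA]. split. intros i Hi; unfold Fpol; destruct (Nat.ltb_spec i (n-2)); auto; lia.
    rewrite (sumR_ext _ _ (fun i => c * (epsv i * Fpol x i ^ 2))) by (intros; ring).
    rewrite sumR_scal, <- area_F by auto. rewrite HA; auto.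
  - intros psi [Hin HT]. split. apply Gpol_S. rewrite area_G.
    rewrite (sumR_ext _ _ (fun i => c * (epsv i * psi i ^ 2))) in HT by (intros; ring).
    rewrite sumR_scal in HT. rewrite <- (Rmult_1_l (sumR _ _)). rewrite <- Hc. rewrite Rmult_assoc, HT. ring.
  - intros x [HS _]. apply GF; auto.
  - intros psi [Hin _]. apply FG; auto.
  - apply cont_of_coords; intros i Hi. unfold Fpol. destruct (Nat.ltb_spec i (n - 2)); [|lia].
    apply ctsS_mult. apply ctsS_const. unfold gg, vx, vy. apply ctsS_minus; apply ctsS_mult; try apply ctsS_const;
    apply ctsS_proj; lia.
  - apply cont_of_coords; intros i Hi. unfold Gpol. destruct (Nat.ltb_spec i (2 * n)); [|lia].
    destruct (Nat.even i); [apply (ctsS_V _ _ (fun k => cos (th (S k)))) | apply (ctsS_V _ _ (fun k => sin (th (S k))))]. Qed.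

End Pol.


Lemma sin_pos x : 0 < x -> x < PI -> 0 < sin x.
Proof. apply sin_gt_0. Qed.
Lemma sin_neg x : -PI < x -> x < 0 -> sin x < 0.
Proof. intros. rewrite <- (Ropp_involutive x), sin_neg. pose proof (sin_gt_0 (-x) ltac:(lra) ltac:(lra)). lra. Qed.

Lemma sin_diff_nz a b : 0 <= a < PI -> 0 <= b < PI -> a <> b -> sin (b - a) <> 0.
Proof. intros Ha Hb Hab. destruct (Rlt_dec a b).
  pose proof (sin_pos (b - a) ltac:(lra) ltac:(lra)); lra.
  pose proof (sin_neg (b - a) ltac:(lra) ltac:(lra)); lra. Qed.

Lemma pp_sin th j : pp th j = sin (th j - th 0%nat).
Proof. unfold pp. rewrite sin_minus. ring. Qed.
Lemma qq_sin th j : qq th j = sin (th (S j) - th j).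
Proof. unfold qq. rewrite sin_minus. ring. Qed.

Lemma kpos s1 s2 s3 : s1 * s2 * s3 < 0 -> 0 < - s1 / (2 * (s2 * s3)).
Proof. intros H. assert (s2 * s3 <> 0) by (intro E; rewrite Rmult_assoc, E in H; lra).
  assert (s2 <> 0) by (intro E; rewrite E in H0; lra). assert (s3 <> 0) by (intro E; rewrite E in H0; lra).
  replace (- s1 / (2 * (s2 * s3))) with (- (s1 * s2 * s3) * / (2 * ((s2 * s3) * (s2 * s3)))) by (field; auto).
  apply Rmult_lt_0_compat. lra. apply Rinv_0_lt_compat. pose proof (Rsqr_pos_lt (s2 * s3) H0) as Q. unfold Rsqr in Q. lra. Qed.

Lemma kneg s1 s2 s3 : 0 < s1 * s2 * s3 -> ~ 0 < - s1 / (2 * (s2 * s3)).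
Proof. intros H. assert (s2 * s3 <> 0) by (intro E; rewrite Rmult_assoc, E in H; lra).
  assert (s2 <> 0) by (intro E; rewrite E in H0; lra). assert (s3 <> 0) by (intro E; rewrite E in H0; lra).
  replace (- s1 / (2 * (s2 * s3))) with (- (s1 * s2 * s3) * / (2 * ((s2 * s3) * (s2 * s3)))) by (field; auto).
  assert (0 < / (2 * ((s2 * s3) * (s2 * s3)))). apply Rinv_0_lt_compat. pose proof (Rsqr_pos_lt (s2 * s3) H0) as Q. unfold Rsqr in Q. lra.
  nra. Qed.

Lemma m_pp x y : 0 < x -> 0 < y -> 0 < x * y. Proof. intros; nra. Qed.
Lemma m_nn x y : x < 0 -> y < 0 -> 0 < x * y. Proof. intros; nra. Qed.
Lemma m_pn x y : 0 < x -> y < 0 -> x * y < 0. Proof. intros; nra. Qed.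
Lemma m_np x y : x < 0 -> 0 < y -> x * y < 0. Proof. intros; nra. Qed.
Ltac sg := first [ assumption | (apply m_pp; [sg|sg]) | (apply m_nn; [sg|sg]) | (apply m_pn; [sg|sg]) | (apply m_np; [sg|sg]) ].

Lemma tri a b c : 0 <= a < PI -> 0 <= b < PI -> 0 <= c < PI -> a <> b -> b <> c -> a <> c ->
  ang b c + ang c a - ang b a =
  if Rlt_dec 0 (- sin (c - b) / (2 * (sin (b - a) * sin (c - a)))) then PI else 0.
Proof. intros Ha Hb Hc Hab Hbc Hac.
  assert (B1 : b < c \/ c < b) by (destruct (Rtotal_order b c) as [?|[?|?]]; [left|contradiction|right]; auto).
  assert (B2 : a < b \/ b < a) by (destruct (Rtotal_order a b) as [?|[?|?]]; [left|contradiction|right]; auto).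
  assert (B3 : a < c \/ c < a) by (destruct (Rtotal_order a c) as [?|[?|?]]; [left|contradiction|right]; auto).
  destruct B1, B2, B3;
  destruct (Rlt_dec 0 (- sin (c - b) / (2 * (sin (b - a) * sin (c - a))))) as [K|K];
  unfold ang; destruct (Rlt_dec b c); destruct (Rlt_dec c a); destruct (Rlt_dec b a); try lra; exfalso.
  all: first [ pose proof (sin_pos (c - b) ltac:(lra) ltac:(lra)) as S1 | pose proof (sin_neg (c - b) ltac:(lra) ltac:(lra)) as S1 ].
  all: first [ pose proof (sin_pos (b - a) ltac:(lra) ltac:(lra)) as S2 | pose proof (sin_neg (b - a) ltac:(lra) ltac:(lra)) as S2 ].
  all: first [ pose proof (sin_pos (c - a) ltac:(lra) ltac:(lra)) as S3 | pose proof (sin_neg (c - a) ltac:(lra) ltac:(lra)) as S3 ].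
  all: first [ apply (kneg (sin (c - b)) (sin (b - a)) (sin (c - a))); [|exact K]
             | apply K; apply kpos ].
  all: sg. Qed.

Lemma npos_ext e e' m : (forall j, (j < m)%nat -> e j = e' j) -> npos e m = npos e' m.
Proof. induction m; intros H; simpl; auto. rewrite H by lia. rewrite IHm by (intros; apply H; lia). auto. Qed.

Lemma npos_neg e m : (forall j, (j < m)%nat -> e j = 1 \/ e j = -1) ->
  (npos (fun i => -1 * e i)%R m + npos e m = m)%nat.
Proof. induction m; intros H; simpl; auto. specialize (IHm ltac:(intros; apply H; lia)).
  destruct (H m ltac:(lia)) as [E|E]; rewrite E;
  destruct (Rlt_dec 0 (-1 * 1)); destruct (Rlt_dec 0 1); destruct (Rlt_dec 0 (-1 * -1)); destruct (Rlt_dec 0 (-1)); lra || lia. Qed.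

Section Count.
Variable n : nat.
Variable th : nat -> R.
Hypothesis Hn : (3 <= n)%nat.
Hypothesis Hth : forall i, (i < n)%nat -> 0 <= th i < PI.
Hypothesis Hnp : forall i j, (i < n)%nat -> (j < n)%nat -> i <> j -> th i <> th j.

Lemma Hpp_of : forall j, (1 <= j)%nat -> (j < n)%nat -> pp th j <> 0.
Proof. intros j H1 H2. rewrite pp_sin. apply sin_diff_nz; try apply Hth; try lia. apply Hnp; lia. Qed.

Lemma Hqq_of : forall j, (1 <= j)%nat -> (S j < n)%nat -> qq th j <> 0.
Proof. intros j H1 H2. rewrite qq_sin. apply sin_diff_nz; try apply Hth; try lia. apply Hnp; lia. Qed.

Definition Tm m := sumR m (fun i => ang (th i) (th (S i))) + ang (th m) (th 0%nat).

Lemma T_formula m : (S m <= n - 1)%nat -> Tm (S m) = PI + PI * INR (npos (epsv th) m).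
Proof. induction m; intros Hm.
  - unfold Tm. simpl. pose proof (Hth 0%nat ltac:(lia)). pose proof (Hth 1%nat ltac:(lia)).
    pose proof (Hnp 0%nat 1%nat ltac:(lia) ltac:(lia) ltac:(lia)).
    unfold ang. destruct (Rlt_dec (th 0%nat) (th 1%nat)); destruct (Rlt_dec (th 1%nat) (th 0%nat)); lra.
  - assert (E : Tm (S (S m)) = Tm (S m) + (ang (th (S m)) (th (S (S m))) + ang (th (S (S m))) (th 0%nat) - ang (th (S m)) (th 0%nat)))
      by (unfold Tm; rewrite (sumR_S (S m)); ring).
    rewrite E, IHm by lia.
    rewrite tri; try apply Hth; try lia; try (apply Hnp; lia).
    change (npos (epsv th) (S m)) with (if Rlt_dec 0 (epsv th m) then S (npos (epsv th) m) else npos (epsv th) m).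
    unfold epsv. fold (kap th (S m)).
    assert (K : kap th (S m) = - sin (th (S (S m)) - th (S m)) / (2 * (sin (th (S m) - th 0%nat) * sin (th (S (S m)) - th 0%nat))))
      by (unfold kap; rewrite qq_sin, !pp_sin; auto).
    rewrite <- K. destruct (Rlt_dec 0 (kap th (S m))); destruct (Rlt_dec 0 1); destruct (Rlt_dec 0 (-1)); try lra.
    all: rewrite ?S_INR; ring. Qed.

Lemma tsum_T : tsum n th = Tm (n - 1).
Proof. unfold tsum, Tm. replace n with (S (n - 1)) at 1 by lia. rewrite sumR_S.
  rewrite nxt_last by lia. f_equal. apply sumR_ext. intros i Hi. rewrite nxt_mid by lia. auto. Qed.

Lemma k_count k : tsum n th = INR k * PI -> k = S (npos (epsv th) (n - 2)).
Proof. intros Ht. rewrite tsum_T in Ht. replace (n - 1)%nat with (S (n - 2)) in Ht by lia.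
  rewrite T_formula in Ht by lia. apply INR_eq. rewrite S_INR. pose proof PI_RGT_0.
  apply (Rmult_eq_reg_r PI); [|lra]. lra. Qed.

End Count.


Definition tag (c : R) (z : nat -> R) : nat -> R := fun i => match i with O => c | S i' => z i' end.

Lemma sumR_shift q f : sumR (S q) f = f 0%nat + sumR q (fun i => f (S i)).
Proof. change (S q) with (1 + q)%nat. rewrite sumR_split. simpl. ring. Qed.

Lemma dist_tag q c z z' : dist (S q) (tag c z) (tag c z') = dist q z z'.
Proof. unfold dist. rewrite sumR_shift. simpl. f_equal. ring. Qed.

Lemma dist_shift q y y' : dist q (shift1 y) (shift1 y') <= dist (S q) y y'.
Proof. unfold dist. apply sqrt_le_1_alt. rewrite sumR_shift. unfold shift1.
  pose proof (pow2_ge_0 (y 0%nat - y' 0%nat)). lra. Qed.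

Lemma homeo_dim p p' q q' A B : p = p' -> q = q' -> homeomorphic p A q B -> homeomorphic p' A q' B.
Proof. intros; subst; auto. Qed.

Lemma homeo_ext p q A A' B : (forall x, A x <-> A' x) -> homeomorphic p A q B -> homeomorphic p A' q B.
Proof. intros E [f [g [a [b [c [d [e h]]]]]]]. exists f, g. repeat split.
  - intros x Hx; apply a, E; auto.
  - intros y Hy; apply E, b; auto.
  - intros x Hx; apply c, E; auto.
  - intros y Hy; apply d; auto.
  - intros x Hx eps He. destruct (e x (proj2 (E x) Hx) eps He) as [del [Hd K]]. exists del; split; auto.
    intros y Hy; apply K, E; auto.
  - intros x Hx eps He. destruct (h x Hx eps He) as [del [Hd K]]. exists del; split; auto. Qed.

Lemma homeo_union p q A1 A2 B1 B2 (h : (nat -> R) -> R) :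
  homeomorphic p A1 q B1 -> homeomorphic p A2 q B2 ->
  ctsS p (fun x => A1 x \/ A2 x) h -> (forall x, A1 x -> h x = -1) -> (forall x, A2 x -> h x = 1) ->
  homeomorphic p (fun x => A1 x \/ A2 x) (S q)
    (fun y => (y 0%nat = 0 /\ B1 (shift1 y)) \/ (y 0%nat = 1 /\ B2 (shift1 y))).
Proof. intros [f1 [g1 [a1 [b1 [c1 [d1 [e1 h1]]]]]]] [f2 [g2 [a2 [b2 [c2 [d2 [e2 h2]]]]]]] Hh H1 H2.
  exists (fun x => if Rlt_dec (h x) 0 then tag 0 (f1 x) else tag 1 (f2 x)),
         (fun y => if Req_EM_T (y 0%nat) 0 then g1 (shift1 y) else g2 (shift1 y)).
  assert (T0 : forall z, shift1 (tag 0 z) = z) by (intros; apply functional_extensionality; auto).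
  assert (T1 : forall z, shift1 (tag 1 z) = z) by (intros; apply functional_extensionality; auto).
  assert (TS : forall y c, y 0%nat = c -> tag c (shift1 y) = y)
    by (intros y c E; apply functional_extensionality; intros [|i]; simpl; auto).
  split; [|split; [|split; [|split; [|split]]]].
  - intros x [Ax|Ax].
    + rewrite H1 by auto. destruct (Rlt_dec (-1) 0); [|lra]. left; split; auto. rewrite T0; auto.
    + rewrite H2 by auto. destruct (Rlt_dec 1 0); [lra|]. right; split; auto. rewrite T1; auto.
  - intros y [[E By]|[E By]]; destruct (Req_EM_T (y 0%nat) 0); try lra; auto.
  - intros x [Ax|Ax].
    + rewrite H1 by auto. destruct (Rlt_dec (-1) 0); [|lra]. simpl. destruct (Req_EM_T 0 0); [|lra]. rewrite T0; auto.
    + rewrite H2 by auto. destruct (Rlt_dec 1 0); [lra|]. simpl. destruct (Req_EM_T 1 0); [lra|]. rewrite T1; auto.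
  - intros y [[E By]|[E By]]; destruct (Req_EM_T (y 0%nat) 0); try lra.
    + rewrite H1 by auto. destruct (Rlt_dec (-1) 0); [|lra]. rewrite d1 by auto. auto.
    + rewrite H2 by auto. destruct (Rlt_dec 1 0); [lra|]. rewrite d2 by auto. auto.
  - intros x Ax eps He. destruct (Hh x Ax 1 ltac:(lra)) as [d0 [Hd0 K0]].
    assert (Sep : forall y, (A1 y \/ A2 y) -> dist p x y < d0 -> (A1 x -> A1 y) /\ (A2 x -> A2 y)).
    { intros y [Ay|Ay] Hy; specialize (K0 y ltac:(tauto) Hy); split; intros Ax'; auto.
      rewrite (H2 x Ax'), (H1 y Ay) in K0. rewrite Rabs_right in K0; lra.
      rewrite (H1 x Ax'), (H2 y Ay) in K0. rewrite Rabs_left in K0; lra. }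
    destruct Ax as [Ax|Ax].
    + destruct (e1 x Ax eps He) as [d [Hd K]]. exists (Rmin d d0); split. apply Rmin_pos; auto.
      intros y Ay Hy. pose proof (Rmin_l d d0); pose proof (Rmin_r d d0).
      assert (Ay1 : A1 y) by (apply (Sep y Ay); auto; lra).
      rewrite (H1 x Ax), (H1 y Ay1). destruct (Rlt_dec (-1) 0); [|lra]. rewrite dist_tag. apply K; auto; lra.
    + destruct (e2 x Ax eps He) as [d [Hd K]]. exists (Rmin d d0); split. apply Rmin_pos; auto.
      intros y Ay Hy. pose proof (Rmin_l d d0); pose proof (Rmin_r d d0).
      assert (Ay1 : A2 y) by (apply (Sep y Ay); auto; lra).
      rewrite (H2 x Ax), (H2 y Ay1). destruct (Rlt_dec 1 0); [lra|]. rewrite dist_tag. apply K; auto; lra.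
  - intros y Hy eps He.
    assert (Sep : forall y', ((y' 0%nat = 0 /\ B1 (shift1 y')) \/ (y' 0%nat = 1 /\ B2 (shift1 y'))) ->
       dist (S q) y y' < 1 -> y' 0%nat = y 0%nat).
    { intros y' Hy' Hd. pose proof (dist_coord (S q) y y' 0 ltac:(lia)).
      destruct Hy as [[E _]|[E _]]; destruct Hy' as [[E' _]|[E' _]]; rewrite E, E' in *;
      try rewrite Rabs_right in H by lra; try rewrite Rabs_left in H by lra; lra. }
    destruct Hy as [[E By]|[E By]].
    + destruct (h1 _ By eps He) as [d [Hd K]]. exists (Rmin d 1); split. apply Rmin_pos; lra.
      intros y' Hy' Hd'. pose proof (Rmin_l d 1); pose proof (Rmin_r d 1).
      pose proof (Sep y' Hy' ltac:(lra)) as E'.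
      destruct (Req_EM_T (y 0%nat) 0); [|lra]. destruct (Req_EM_T (y' 0%nat) 0); [|lra].
      apply K. destruct Hy' as [[_ B]|[E2 _]]; auto; lra.
      pose proof (dist_shift q y y'). lra.
    + destruct (h2 _ By eps He) as [d [Hd K]]. exists (Rmin d 1); split. apply Rmin_pos; lra.
      intros y' Hy' Hd'. pose proof (Rmin_l d 1); pose proof (Rmin_r d 1).
      pose proof (Sep y' Hy' ltac:(lra)) as E'.
      destruct (Req_EM_T (y 0%nat) 0); [lra|]. destruct (Req_EM_T (y' 0%nat) 0); [lra|].
      apply K. destruct Hy' as [[E2 _]|[_ B]]; auto; lra.
      pose proof (dist_shift q y y'). lra.
Qed.

Lemma ctsS_area n A : ctsS (2 * n) A (area n).
Proof. unfold area. apply ctsS_scal.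
  apply (ctsS_sum (2*n) A n (fun i x => vx x i * vy x (nxt n i) - vx x (nxt n i) * vy x i)).
  intros i Hi. assert (Hn : (nxt n i < n)%nat) by (unfold nxt; apply Nat.mod_upper_bound; lia).
  unfold vx, vy. apply ctsS_minus; apply ctsS_mult; apply ctsS_proj; lia. Qed.


Theorem mainTheorem3 (n k : nat) (theta : nat -> R)
  (Hn : (3 <= n)%nat)
  (Hth : forall i, (i < n)%nat -> 0 <= theta i < PI)
  (Hnp : forall i j, (i < n)%nat -> (j < n)%nat -> i <> j -> theta i <> theta j)
  (Ht : tsum n theta = INR k * PI) :
  homeomorphic (2 * n) (Sminus n theta)
               ((n - k - 1) + (k - 1)) (SphDisc (n - k - 1) (k - 1)) /\
  homeomorphic (2 * n) (Splus n theta)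
               ((k - 1) + (n - k - 1)) (SphDisc (k - 1) (n - k - 1)) /\
  homeomorphic (2 * n) (Sconf n theta)
               (S (n - 2)) (DisjU (n - k - 1) (k - 1) (k - 1) (n - k - 1)).
Proof.
  pose proof (Hpp_of n theta Hn Hth Hnp) as Hpp.
  pose proof (Hqq_of n theta Hn Hth Hnp) as Hqq.
  pose proof (k_count n theta Hn Hth Hnp k Ht) as Hk.
  pose proof (npos_le (epsv theta) (n - 2)) as Hle.
  assert (Epm : forall j, (j < n - 2)%nat -> epsv theta j = 1 \/ epsv theta j = -1) by (intros; apply epsv_pm).
  assert (Ppos : npos (fun i => 1 * epsv theta i) (n - 2) = (k - 1)%nat).
  { rewrite (npos_ext _ (epsv theta)) by (intros; ring). lia. }
  assert (Pneg : npos (fun i => -1 * epsv theta i) (n - 2) = (n - k - 1)%nat).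
  { pose proof (npos_neg (epsv theta) (n - 2) Epm). lia. }
  assert (Hplus : homeomorphic (2 * n) (Splus n theta) ((k - 1) + (n - k - 1)) (SphDisc (k - 1) (n - k - 1))).
  { eapply homeo_trans. apply (pol_homeo n theta Hn Hpp Hqq 1); ring.
    eapply homeo_trans. 
    - pose proof (perm_homeo (n - 2) (fun i => 1 * epsv theta i)
        ltac:(intros j Hj; destruct (Epm j Hj) as [E|E]; rewrite E; first [left; ring | right; ring])) as P.
      rewrite Ppos in P. replace (n - 2 - (k - 1))%nat with (n - k - 1)%nat in P by lia.
      apply (homeo_dim (n - 2) (n - 2) (n - 2) ((k - 1) + (n - k - 1))); [reflexivity|lia|exact P].
    - apply hyp_sph. }
  assert (Hminus : homeomorphic (2 * n) (Sminus n theta) ((n - k - 1) + (k - 1)) (SphDisc (n - k - 1) (k - 1))).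
  { eapply homeo_trans. apply (pol_homeo n theta Hn Hpp Hqq (-1)); ring.
    eapply homeo_trans. 
    - pose proof (perm_homeo (n - 2) (fun i => -1 * epsv theta i)
        ltac:(intros j Hj; destruct (Epm j Hj) as [E|E]; rewrite E; first [left; ring | right; ring])) as P.
      rewrite Pneg in P. replace (n - 2 - (n - k - 1))%nat with (k - 1)%nat in P by lia.
      apply (homeo_dim (n - 2) (n - 2) (n - 2) ((n - k - 1) + (k - 1))); [reflexivity|lia|exact P].
    - apply hyp_sph. }
  split; [exact Hminus|split; [exact Hplus|]].
  apply (homeo_ext _ _ (fun x => Sminus n theta x \/ Splus n theta x)).
  { intros x; unfold Sconf, Sminus, Splus. split.
    - intros [[S1 A1]|[S1 A1]]; split; auto; rewrite A1; [rewrite Rabs_left|rewrite Rabs_right]; lra.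
    - intros [S1 A1]. destruct (Rle_dec 0 (area n x)).
      + right; split; auto. rewrite Rabs_right in A1; lra.
      + left; split; auto. rewrite Rabs_left in A1; lra. }
  apply (homeo_union (2 * n) (n - 2) _ _ _ _ (area n)).
  - apply (homeo_dim (2 * n) (2 * n) ((n - k - 1) + (k - 1))); [reflexivity|lia|exact Hminus].
  - apply (homeo_dim (2 * n) (2 * n) ((k - 1) + (n - k - 1))); [reflexivity|lia|exact Hplus].
  - apply ctsS_area.
  - intros x [_ A]; auto.
  - intros x [_ A]; auto.
Qed.
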